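(* Let $\mu\in\mathbb{R}$, $\alpha>0$, $\lambda_1,\dots,\lambda_n,\lambda^*_1,\dots,\lambda^*_n>0$. Let $X_1,\dots,X_n$ be independent with $X_i\sim\mathrm{Fr\acute{e}}(\mu,\lambda_i,\alpha)$ and $X^*_1,\dots,X^*_n$ independent with $X^*_i\sim\mathrm{Fr\acute{e}}(\mu,\lambda^*_i,\alpha)$. (i) If $\alpha\ge1$ and $\sum_{i=j}^{n}\lambda^*_{(i)}\le\sum_{i=j}^{n}\lambda_{(i)}$ for all $j=1,\dots,n$, then $X_{n:n}\ge_{\rm rh}X^*_{n:n}$. (ii) If $0<\alpha\le1$ and $\sum_{i=1}^{j}\lambda^*_{(i)}\ge\sum_{i=1}^{j}\lambda_{(i)}$ for all $j=1,\dots,n$, then $X_{n:n}\le_{\rm rh}X^*_{n:n}$.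
   Context: $X\sim \mathrm{Fr\acute{e}}(\mu,\lambda,\alpha)$ means distribution function $\exp\{-((x-\mu)/\lambda)^{-\alpha}\}$ for $x>\mu$. $X_{n:n}=\max_i X_i$. $\lambda_{(1)}\le\dots\le\lambda_{(n)}$ are the components in increasing order. $X\le_{\rm rh}Y$ means the reversed hazard rate $F'/F$ of $X$ is pointwise $\le$ that of $Y$. *)

(* Defs.v *)
From mathcomp Require Import all_boot all_order all_algebra.
From mathcomp Require Import all_classical all_reals all_analysis.
Set Implicit Arguments. Unset Strict Implicit. Unset Printing Implicit Defensive.
Import Order.TTheory GRing.Theory Num.Theory.
Local Open Scope ring_scope.

Definition frechet_cdf {R : realType} (mu lam alpha : R) (x : R) : R :=
  if mu < x then expR (- (((x - mu) / lam) `^ (- alpha))) else 0.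

(* Distribution function of X_{n:n} = max_i X_i for independent
   X_i ~ Fre(mu, lam_i, alpha): the product of the marginal cdfs. *)
Definition max_frechet_cdf {R : realType} (n : nat) (mu alpha : R)
  (lam : n.-tuple R) (x : R) : R :=
  \prod_(i < n) frechet_cdf mu (tnth lam i) alpha x.

(* Reversed hazard rate F'/F (with the MathComp convention y/0 = 0,
   so it is 0 outside the support). *)
Definition rev_hazard {R : realType} (F : R -> R) (x : R) : R :=
  derive1 F x / F x.

(* X <=_rh Y, expressed on distribution functions F (of X) and G (of Y). *)
Definition rh_le {R : realType} (F G : R -> R) : Prop :=
  forall x : R, rev_hazard F x <= rev_hazard G x.

(* Components in increasing order: (ordered lam)`_k = lambda_{(k+1)}. *)
Definition ordered {R : realType} (n : nat) (lam : n.-tuple R) : seq R :=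
  sort <=%R (tval lam).

(* Main.v *)
Require Import Defs.
From mathcomp Require Import all_boot all_order all_algebra.
From mathcomp Require Import all_classical all_reals all_analysis.
From mathcomp Require Import lra.
Import Order.TTheory GRing.Theory Num.Theory.
Local Open Scope ring_scope.

Set Implicit Arguments. Unset Strict Implicit. Unset Printing Implicit Defensive.

Lemma tangent_le (R : realType) (f df : R -> R) (x y : R) :
  0 < x -> 0 < y ->
  (forall z : R, 0 < z -> is_derive z 1 f (df z)) ->
  (forall u v : R, 0 < u -> u <= v -> df u <= df v) ->
  f x + df x * (y - x) <= f y.
Proof.
move=> x0 y0 hd hm.
have hoo : forall a b z : R, 0 < a -> z \in `]a, b[%R -> is_derive z 1 f (df z).
  move=> a b z a0; rewrite in_itv /= => /andP[az _].
  exact: hd (lt_trans a0 az).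
have hcc : forall a b z : R, 0 < a -> z \in `[a, b]%R -> derivable f z 1.
  move=> a b z a0; rewrite in_itv /= => /andP[az _].
  by have [] := hd z (lt_le_trans a0 az).
case: (ltgtP x y) => [xy|yx|<-]; last by rewrite subrr mulr0 addr0.
- have [c] := MVT xy (hoo _ _ ^~ x0) (derivable_within_continuous (hcc _ _ ^~ x0)).
  rewrite in_itv /= => /andP[xc cy] E.
  rewrite -lerBrDl E ler_pM2r ?subr_gt0 //.
  by apply: hm => //; apply: ltW.
- have [c] := MVT yx (hoo _ _ ^~ y0) (derivable_within_continuous (hcc _ _ ^~ y0)).
  rewrite in_itv /= => /andP[yc cx] E.
  have : df c * (x - y) <= df x * (x - y).
    by rewrite ler_pM2r ?subr_gt0 //; apply: hm (ltW cx); apply: lt_trans yc.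
  rewrite -E; move=> h.
  have -> : df x * (y - x) = - (df x * (x - y)) by rewrite -mulrN opprB.
  lra.
Qed.

Lemma pow_tangent1 (R : realType) (a x y : R) : 1 <= a -> 0 < x -> 0 < y ->
  x `^ a + a * x `^ (a - 1) * (y - x) <= y `^ a.
Proof.
move=> a1 x0 y0.
have := (@tangent_le R (fun z => z `^ a) (fun z => a * z `^ (a - 1)) x y x0 y0).
apply.
move=> u v u0 uv; rewrite ler_wpM2l //; first lra.
  apply: ge0_ler_powR => //; rewrite ?nnegrE ?subr_ge0 //; [exact: ltW|].
  exact: ltW (lt_le_trans u0 uv).
Qed.

Lemma pow_tangent2 (R : realType) (a x y : R) : 0 < a -> a <= 1 -> 0 < x -> 0 < y ->
  y `^ a <= x `^ a + a * x `^ (a - 1) * (y - x).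
Proof.
move=> a0 a1 x0 y0.
have := (@tangent_le R (fun z => - z `^ a) (fun z => - (a * z `^ (a - 1))) x y x0 y0).
have -> : - (a * x `^ (a - 1)) * (y - x) = - (a * x `^ (a - 1) * (y - x)) by rewrite mulNr.
move=> h; suff : - x `^ a + - (a * x `^ (a - 1) * (y - x)) <= - y `^ a by lra.
apply: h.
- by move=> z z0; apply: is_deriveN; apply: is_derive1_powR.
- move=> u v u0 uv; rewrite lerN2 ler_wpM2l //; first lra.
  have v0 : 0 < v := lt_le_trans u0 uv.
  have -> : a - 1 = - (1 - a) by rewrite opprB.
  rewrite !powRN lef_pV2 ?posrE ?powR_gt0 //.
  apply: ge0_ler_powR => //; rewrite ?nnegrE ?subr_ge0 //; exact: ltW.
Qed.

Lemma frechet_eq (R : realType) (mu l a y : R) : 0 < l -> mu < y ->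
  frechet_cdf mu l a y = expR (- ((y - mu) `^ (- a) * l `^ a)).
Proof.
move=> l0 my; rewrite /frechet_cdf my; congr (expR (- _)).
have ym : 0 < y - mu by rewrite subr_gt0.
rewrite /powR !gt_eqF ?divr_gt0 //.
rewrite lnM ?posrE ?invr_gt0 // lnV ?posrE // -expRD; congr expR; lra.
Qed.

Definition Ssum (R : realType) (n : nat) (a : R) (lam : n.-tuple R) : R :=
  \sum_(i < n) (tnth lam i) `^ a.

Lemma maxcdf_eq (R : realType) n (mu a y : R) (lam : n.-tuple R) :
  (forall i, 0 < tnth lam i) -> mu < y ->
  max_frechet_cdf mu a lam y = expR (- ((y - mu) `^ (- a) * Ssum a lam)).
Proof.
move=> hl my; rewrite /max_frechet_cdf.
under eq_bigr => i _ do rewrite frechet_eq //.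
by rewrite -expR_sum /Ssum mulr_sumr sumrN.
Qed.

Lemma p_derive (R : realType) (mu a x : R) : mu < x ->
  derivable (fun y => (y - mu) `^ (- a)) x 1 /\
  (derive1 (fun y => (y - mu) `^ (- a)) x = - a * (x - mu) `^ (- a - 1)).
Proof.
move=> mx; have xm : 0 < x - mu by rewrite subr_gt0.
have hf : is_derive x (1:R) (fun y => y - mu) 1.
  exact: (@is_derive_shift R x 1 (- mu)).
have hg : is_derive (x - mu) (1:R) (fun z : R => z `^ (- a)) (- a * (x - mu) `^ (- a - 1)).
  exact: is_derive1_powR.
have df : derivable (fun y => y - mu) x 1 by case: hf.
have dg : derivable (fun z : R => z `^ (- a)) (x - mu) 1 by case: hg.
split.
  apply/derivable1_diffP.
  apply: (@differentiable_comp _ _ _ _ (fun y => y - mu) (fun z : R => z `^ (- a))).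
    exact/derivable1_diffP.
  exact/derivable1_diffP.
have := derive1_comp df dg => /= ->.
rewrite !derive1E; have [_ ->] := hg; have [_ ->] := hf; by rewrite mulr1.
Qed.

Definition hfun (R : realType) (mu a x : R) : R :=
  if mu < x then a * (x - mu) `^ (- a - 1) else 0.

Lemma rh_eq (R : realType) n (mu a x : R) (lam : n.-tuple R) :
  (forall i, 0 < tnth lam i) ->
  rev_hazard (max_frechet_cdf mu a lam) x = Ssum a lam * hfun mu a x.
Proof.
move=> hl; rewrite /rev_hazard /hfun.
case: ifPn => [mx|]; last first.
  rewrite -leNgt => xm; rewrite mulr0.
  case: n lam hl => [|k] lam hl.
    have -> : max_frechet_cdf mu a lam = cst 1.
      by apply/funext => y; rewrite /max_frechet_cdf big_ord0.
    by rewrite derive1_cst mul0r.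
  have -> : max_frechet_cdf mu a lam x = 0.
    rewrite /max_frechet_cdf (bigD1 ord0) //= /frechet_cdf ifF ?mul0r //.
    by apply/negbTE; rewrite -leNgt.
  by rewrite invr0 mulr0.
set S := Ssum a lam.
have E : derive1 (max_frechet_cdf mu a lam) x =
         derive1 (fun y => expR (- ((y - mu) `^ (- a) * S))) x.
  rewrite !derive1E; apply: near_eq_derive.
  near=> y; rewrite maxcdf_eq //; near: y; exact: lt_nbhsr.
rewrite E maxcdf_eq //.
have [dp vp] := p_derive a mx.
set k := fun y => - ((y - mu) `^ (- a) * S).
have dk : derivable k x 1.
  apply: derivableN; apply: derivableM => //; exact: derivable_cst.
have := @derive1_comp R k expR x dk (@derivable_expR R (k x)).
rewrite /= => ->.
have -> : derive1 expR (k x) = expR (k x) by rewrite derive1E derive_val.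
rewrite /k derive1N; last by apply: derivableM => //; exact: derivable_cst.
rewrite derive1Mr // vp.
set e := expR _.
have e0 : e != 0 by rewrite gt_eqF // expR_gt0.
rewrite mulrAC mulfV // mul1r mulNr mulNr opprK; lra.
Unshelve. all: by end_near.
Qed.

Lemma abel_tail (R : realType) (c d : nat -> R) (n : nat) :
  (forall i, (i.+1 < n)%N -> c i <= c i.+1) ->
  (forall j, (j < n)%N -> 0 <= \sum_(j <= i < n) d i) ->
  forall j, c j * \sum_(j <= i < n) d i <= \sum_(j <= i < n) c i * d i.
Proof.
move=> hc hd j.
have [jn|nj] := ltnP j n; last by rewrite !big_geq // mulr0.
suff : forall m j, (j + m = n)%N -> c j * \sum_(j <= i < n) d i <= \sum_(j <= i < n) c i * d i.
  by apply; exact: subnKC (ltnW jn).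
clear jn; elim=> [|m IH] {}j e.
  by rewrite addn0 in e; rewrite e !big_geq // mulr0.
have jn' : (j < n)%N by rewrite -e addnS ltnS leq_addr.
rewrite (@big_ltn _ _ _ _ _ d jn') (@big_ltn _ _ _ _ _ (fun i => c i * d i) jn').
have e' : (j.+1 + m = n)%N by rewrite addSnnS.
have := IH _ e'.
have [j1n|nj1] := ltnP j.+1 n.
  have h1 := hd _ j1n; have h2 := hc _ j1n.
  have h3 : c j * \sum_(j.+1 <= i < n) d i <= c j.+1 * \sum_(j.+1 <= i < n) d i.
    by rewrite ler_wpM2r.
  rewrite mulrDr; lra.
rewrite !big_geq // mulr0 => _; rewrite mulrDr mulr0; lra.
Qed.

Lemma abel_pre (R : realType) (c e : nat -> R) (n : nat) :
  (forall i, (i.+1 < n)%N -> c i.+1 <= c i) ->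
  (forall j, (j < n)%N -> 0 <= \sum_(0 <= i < j.+1) e i) ->
  forall j, (j < n)%N -> c j * \sum_(0 <= i < j.+1) e i <= \sum_(0 <= i < j.+1) c i * e i.
Proof.
move=> hc he; elim=> [|j IH] jn.
  by rewrite !big_nat1.
rewrite big_nat_recr //= [X in _ <= X]big_nat_recr //=.
have := IH (ltnW jn).
have h1 := he _ (ltnW jn); have h2 := hc _ jn.
have h3 : c j.+1 * \sum_(0 <= i < j.+1) e i <= c j * \sum_(0 <= i < j.+1) e i.
  by rewrite ler_wpM2r.
rewrite mulrDr; lra.
Qed.

Lemma major1 (R : realType) (a b : nat -> R) (n : nat) (al : R) :
  1 <= al -> (forall i, (i < n)%N -> 0 < a i) -> (forall i, (i < n)%N -> 0 < b i) ->
  (forall i, (i.+1 < n)%N -> a i <= a i.+1) ->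
  (forall j, (j < n)%N -> \sum_(j <= i < n) a i <= \sum_(j <= i < n) b i) ->
  \sum_(0 <= i < n) (a i) `^ al <= \sum_(0 <= i < n) (b i) `^ al.
Proof.
move=> a1 ha hb hs ht.
set c := fun i => al * (a i) `^ (al - 1).
apply: (@le_trans _ _ (\sum_(0 <= i < n) ((a i) `^ al + c i * (b i - a i)))); last first.
  apply: ler_sum_nat => i /andP[_ i_n]; exact: (pow_tangent1 a1 (ha _ i_n) (hb _ i_n)).
rewrite big_split /= lerDl.
case: n ha hb hs ht => [|m] ha hb hs ht; first by rewrite big_geq.
have hc' : forall i, (i.+1 < m.+1)%N -> c i <= c i.+1.
  move=> i im; rewrite /c ler_wpM2l //; first lra.
  apply: ge0_ler_powR; rewrite ?nnegrE ?subr_ge0 //; last exact: hs.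
  + exact: ltW (ha _ (ltnW im)).
  + exact: ltW (ha _ im).
have hd' : forall j, (j < m.+1)%N -> 0 <= \sum_(j <= i < m.+1) (b i - a i).
  move=> j jn; rewrite sumrB subr_ge0; exact: ht.
have := @abel_tail R c (fun i => b i - a i) m.+1 hc' hd' 0%N.
apply: le_trans; apply: mulr_ge0.
  rewrite /c; apply: mulr_ge0; [lra|exact: powR_ge0].
exact: hd'.
Qed.

Lemma major2 (R : realType) (a b : nat -> R) (n : nat) (al : R) :
  0 < al -> al <= 1 -> (forall i, (i < n)%N -> 0 < a i) -> (forall i, (i < n)%N -> 0 < b i) ->
  (forall i, (i.+1 < n)%N -> a i <= a i.+1) ->
  (forall j, (j < n)%N -> \sum_(0 <= i < j.+1) b i <= \sum_(0 <= i < j.+1) a i) ->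
  \sum_(0 <= i < n) (b i) `^ al <= \sum_(0 <= i < n) (a i) `^ al.
Proof.
move=> a0 a1 ha hb hs ht.
set c := fun i => al * (a i) `^ (al - 1).
apply: (@le_trans _ _ (\sum_(0 <= i < n) ((a i) `^ al - c i * (a i - b i)))).
  apply: ler_sum_nat => i /andP[_ i_n].
  have -> : c i * (a i - b i) = - (c i * (b i - a i)) by rewrite -mulrN opprB.
  rewrite opprK; exact: (pow_tangent2 a0 a1 (ha _ i_n) (hb _ i_n)).
rewrite sumrB gerBl.
case: n ha hb hs ht => [|m] ha hb hs ht; first by rewrite big_geq.
have hc' : forall i, (i.+1 < m.+1)%N -> c i.+1 <= c i.
  move=> i im; rewrite /c ler_wpM2l //; first lra.
  have u0 := ha _ (ltnW im); have v0 := ha _ im.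
  have -> : al - 1 = - (1 - al) by rewrite opprB.
  rewrite !powRN lef_pV2 ?posrE ?powR_gt0 //.
  apply: ge0_ler_powR; rewrite ?nnegrE ?subr_ge0 //; last exact: hs.
  + exact: ltW.
  + exact: ltW.
have hd' : forall j, (j < m.+1)%N -> 0 <= \sum_(0 <= i < j.+1) (a i - b i).
  move=> j jn; rewrite sumrB subr_ge0; exact: ht.
have := @abel_pre R c (fun i => a i - b i) m.+1 hc' hd' m (ltnSn m).
apply: le_trans; apply: mulr_ge0.
  rewrite /c; apply: mulr_ge0; [lra|exact: powR_ge0].
exact: hd'.
Qed.

Lemma Ssum_sorted (R : realType) n (a : R) (lam : n.-tuple R) :
  Ssum a lam = \sum_(0 <= i < n) ((ordered lam)`_i) `^ a.
Proof.
rewrite /Ssum /ordered.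
have -> : \sum_(i < n) (tnth lam i) `^ a = \sum_(v <- lam) v `^ a by rewrite big_tuple.
have hp : perm_eq (sort <=%R (tval lam)) (tval lam) by rewrite perm_sort perm_refl.
rewrite -(perm_big _ hp).
by rewrite (big_nth 0) size_sort size_tuple.
Qed.

Lemma ordered_pos (R : realType) n (lam : n.-tuple R) :
  (forall i, 0 < tnth lam i) -> forall i, (i < n)%N -> 0 < (ordered lam)`_i.
Proof.
move=> hl i iN.
have : (ordered lam)`_i \in ordered lam by apply: mem_nth; rewrite size_sort size_tuple.
rewrite mem_sort => /tnthP [j ->]; exact: hl.
Qed.

Lemma ordered_sorted (R : realType) n (lam : n.-tuple R) :
  forall i, (i.+1 < n)%N -> (ordered lam)`_i <= (ordered lam)`_i.+1.
Proof.
move=> i iN.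
apply: (sorted_leq_nth le_trans lexx 0 (sort_sorted le_total _)).
- by rewrite inE size_sort size_tuple ltnW.
- by rewrite inE size_sort size_tuple.
- exact: leqnSn.
Qed.

Lemma hfun_ge0 (R : realType) (mu a x : R) : 0 < a -> 0 <= hfun mu a x.
Proof.
move=> a0; rewrite /hfun; case: ifP => _ //.
apply: mulr_ge0; [exact: ltW | exact: powR_ge0].
Qed.

Unset Implicit Arguments.

Theorem mainTheorem10 (R : realType) (n : nat) (mu alpha : R)
  (lam lamS : n.-tuple R) :
  0 < alpha ->
  (forall i : 'I_n, 0 < tnth lam i) ->
  (forall i : 'I_n, 0 < tnth lamS i) ->
  (* (i) *)
  (1 <= alpha ->
   (forall j : 'I_n,
      \sum_(j <= i < n) (ordered lamS)`_i <= \sum_(j <= i < n) (ordered lam)`_i) ->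
   rh_le (max_frechet_cdf mu alpha lamS) (max_frechet_cdf mu alpha lam))
  /\
  (* (ii) *)
  (alpha <= 1 ->
   (forall j : 'I_n,
      \sum_(0 <= i < j.+1) (ordered lam)`_i <= \sum_(0 <= i < j.+1) (ordered lamS)`_i) ->
   rh_le (max_frechet_cdf mu alpha lam) (max_frechet_cdf mu alpha lamS)).
Proof.
move=> a0 hl hlS; split => a1 H x; rewrite /rh_le !rh_eq //;
  apply: ler_wpM2r; try exact: hfun_ge0; rewrite !Ssum_sorted.
- apply: major1 => //.
  + exact: ordered_pos.
  + exact: ordered_pos.
  + exact: ordered_sorted.
  + by move=> j jn; exact: (H (Ordinal jn)).
- apply: major2 => //.
  + exact: ordered_pos.
  + exact: ordered_pos.
  + exact: ordered_sorted.
  + by move=> j jn; exact: (H (Ordinal jn)).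
Qed.
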